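(* Let $\theta\sim G$ with bounded support and let $Y$, taking countably many values, have conditional probability mass function $f_\theta$ given $\theta$; let $Y_1,\dots,Y_n$ be i.i.d. with mass function $p_y=P_G(Y=y)=\int f_\theta(y)\,dG(\theta)$. For a sequence $\varepsilon_n\to0$ let $S_n=S_n(\varepsilon_n)=\{y: p_y\ge \varepsilon_n/n\}$, and assume: (i) $P_G(Y\in S_n)=1-o(1/n)$; (ii) for $\varepsilon_n\to0$ sufficiently slowly, $|S_n|=O(\log n)$. Let $n_y=\#\{i:Y_i=y\}$ and $\hat p_y=n_y/n$. Then for every $\alpha>0$, $$\sum_y n_y\log\frac{\hat p_y}{p_y}=o_p\big((\log n)^{1+\alpha}\big).$$
   Context: $\hat F_n$ denotes the empirical distribution of $Y_1,\dots,Y_n$ (the nonparametric MLE); the left-hand side is the log-likelihood ratio $\sum_i\log\big(P_{\hat F_n}(Y_i)/P_G(Y_i)\big)$. Conditions (i)–(ii) are the paper's assumption on $G$ (stated in terms of ''an $o(1)$ function''), which the paper notes holds in its binomial and Poisson sampling scenarios e.g. when the support of $G$ is bounded. *)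

(* Defs.v *)
From HB Require Import structures.
From mathcomp Require Import all_boot all_order all_algebra.
From mathcomp Require Import all_classical all_reals all_analysis.
Set Implicit Arguments. Unset Strict Implicit. Unset Printing Implicit Defensive.
Import Order.TTheory GRing.Theory Num.Theory.
Import numFieldNormedType.Exports.
Local Open Scope classical_set_scope.
Local Open Scope ring_scope.

Section Defs.
Variable R : realType.

Definition Sn (p : nat -> R) (eps : nat -> R) (n : nat) : set nat :=
  [set y | eps n / n%:R <= p y].

Definition prob_notS (p : nat -> R) (eps : nat -> R) (n : nat) : \bar R :=
  \esum_(y in ~` Sn p eps n) (p y)%:E.

Definition cnt (n : nat) (w : n.-tuple nat) (y : nat) : nat :=
  count_mem y w.

(* sum_y n_y log(phat_y / p_y), summing over the y with n_y > 0
   (convention 0 log 0 = 0), phat_y = n_y / n *)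
Definition loglik_ratio (p : nat -> R) (n : nat) (w : n.-tuple nat) : R :=
  \sum_(y <- undup w) (cnt w y)%:R * ln (((cnt w y)%:R / n%:R) / p y).

Definition iid_prob (p : nat -> R) (n : nat) (A : set (n.-tuple nat)) : \bar R :=
  \esum_(w in A) (\prod_(i < n) p (tnth w i))%:E.

End Defs.

(* Main.v *)
Require Import Defs.
From HB Require Import structures.
From mathcomp Require Import all_boot all_order all_algebra.
From mathcomp Require Import all_classical all_reals all_analysis.
From mathcomp Require Import ring lra measurable_realfun.
Import Order.TTheory GRing.Theory Num.Theory.
Import numFieldNormedType.Exports.
Local Open Scope classical_set_scope.
Local Open Scope ring_scope.


Lemma esumZr (R : realType) (T : choiceType) (I : set T) (c : R) (a : T -> \bar R) :
  (0 <= c) -> (forall x, (0 <= a x)%E) ->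
  (\esum_(i in I) (c%:E * a i) = c%:E * \esum_(i in I) a i)%E.
Proof.
move=> c0 a0; rewrite /esum -ereal_supZl//; last first.
  by apply/set0P; exists 0%E; exists set0; [exact: fsets_set0|rewrite fsbig_set0].
congr ereal_sup; apply/seteqP; split => x /=.
  by move=> [X XI <-]; exists (\sum_(i \in X) a i)%E; [exists X|rewrite ge0_mule_fsumr].
by move=> [y [X XI <-] <-]; exists X => //; rewrite ge0_mule_fsumr.
Qed.

Lemma esum_prod (R : realType) (n : nat) (g : 'I_n -> nat -> R) (s : 'I_n -> R) :
  (forall i y, 0 <= g i y) ->
  (forall i, \esum_(y in [set: nat]) (g i y)%:E = (s i)%:E) ->
  \esum_(w in [set: n.-tuple nat]) (\prod_(i < n) g i (tnth w i))%:E
    = (\prod_(i < n) s i)%:E.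
Proof.
elim: n g s => [|n IH] g s g0 gs.
  rewrite big_ord0 (_ : [set: 0.-tuple nat] = [set [tuple]]); last first.
    by apply/seteqP; split => // w _; rewrite /= [w]tuple0.
  by rewrite esum_set1 ?big_ord0.
rewrite (reindex_esum ([set: nat] `*`` (fun=> [set: n.-tuple nat])) _ (fun xw => [tuple of xw.1 :: xw.2])); last first.
  split.
  - by [].
  - by move=> [x1 w1] [x2 w2] _ _ /= [-> /val_inj ->].
  - move=> w _; case/tupleP: w => x w; exists (x, w) => //=.
rewrite (eq_esum (b := fun k => (fun x w => (g ord0 x)%:E * (\prod_(i < n) g (lift ord0 i) (tnth w i))%:E)%E k.1 k.2)); last first.
  move=> [x w] _ /=; rewrite big_ord_recl /= EFinM; congr (_ * _)%E.
  by congr (_%:E); apply: eq_bigr => i _; rewrite tnthS.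
rewrite -(esum_esum (a := fun x w => (g ord0 x)%:E * (\prod_(i < n) g (lift ord0 i) (tnth w i))%:E)%E); last by move=> *; rewrite -EFinM lee_fin mulr_ge0 ?prodr_ge0.
have s0 i : 0 <= s i by rewrite -lee_fin -gs esum_ge0// => y _; rewrite lee_fin.
have inner x : (\esum_(j in [set: n.-tuple nat])
   ((g ord0 x)%:E * (\prod_(i0 < n) g (lift ord0 i0) (tnth j i0))%:E) =
   (\prod_(i < n) s (lift ord0 i))%:E * (g ord0 x)%:E)%E.
  rewrite esumZr; last 2 first.
  - exact: g0.
  - by move=> w; rewrite lee_fin prodr_ge0.
  rewrite (IH (fun i => g (lift ord0 i)) (fun i => s (lift ord0 i))).
  - exact: muleC.
  - by move=> i y; apply: g0.
  - by move=> i; apply: gs.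
rewrite (eq_esum (fun x _ => inner x)).
rewrite esumZr; last 2 first.
- by apply: prodr_ge0 => i _; exact: s0.
- by move=> x; rewrite lee_fin.
by rewrite gs big_ord_recl -EFinM mulrC.
Qed.

Set Implicit Arguments. Unset Strict Implicit.


Definition Wt (R : realType) (p : nat -> R) n (w : n.-tuple nat) : R :=
  \prod_(i < n) p (tnth w i).

Definition Ex (R : realType) (p : nat -> R) n (F : n.-tuple nat -> R) : \bar R :=
  \esum_(w in [set: n.-tuple nat]) (F w * Wt p w)%:E.

Lemma Wt_ge0 (R : realType) (p : nat -> R) n (w : n.-tuple nat) :
  (forall y, 0 <= p y) -> 0 <= Wt p w.
Proof. by move=> p0; apply: prodr_ge0 => i _. Qed.

Lemma Ex_prod (R : realType) (p : nat -> R) n (h : 'I_n -> nat -> R) (s : 'I_n -> R) :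
  (forall y, 0 <= p y) -> (forall i y, 0 <= h i y) ->
  (forall i, \esum_(y in [set: nat]) (h i y * p y)%:E = (s i)%:E) ->
  Ex p (fun w => \prod_(i < n) h i (tnth w i)) = (\prod_(i < n) s i)%:E.
Proof.
move=> p0 h0 hs; rewrite /Ex -(@esum_prod R n (fun i y => h i y * p y) s)//; last first.
  by move=> i y; rewrite mulr_ge0.
by apply: eq_esum => w _; rewrite /Wt -big_split.
Qed.

Lemma esum_point (R : realType) (p : nat -> R) (y : nat) :
  (forall y, 0 <= p y) ->
  \esum_(x in [set: nat]) ((x == y)%:R * p x)%:E = (p y)%:E.
Proof.
move=> p0; rewrite -(esum_set1 (a := fun x => (p x)%:E)) ?lee_fin//.
rewrite [in RHS]esum_mkcond; apply: eq_esum => x _.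
have [->|nxy] := eqVneq x y; first by rewrite mem_set//= mul1r.
by rewrite memNset ?mul0r//; apply/eqP.
Qed.

Lemma esum_one (R : realType) (p : nat -> R) :
  \esum_(x in [set: nat]) (1 * p x)%:E = \esum_(x in [set: nat]) (p x)%:E.
Proof. by apply: eq_esum => x _; rewrite mul1r. Qed.

Lemma Ex_single (R : realType) (p : nat -> R) n (i : 'I_n) (h : nat -> R) (s : R) :
  (forall y, 0 <= p y) -> (forall y, 0 <= h y) ->
  \esum_(y in [set: nat]) (p y)%:E = 1%E ->
  \esum_(y in [set: nat]) (h y * p y)%:E = s%:E ->
  Ex p (fun w => h (tnth w i)) = s%:E.
Proof.
move=> p0 h0 p1 hs.
have -> : (fun w : n.-tuple nat => h (tnth w i)) =
  (fun w => \prod_(k < n) (if k == i then h else (fun=> 1)) (tnth w k)).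
  apply/funext => w; rewrite (bigD1 i)//= eqxx big1 ?mulr1// => k /negbTE ->//.
rewrite (@Ex_prod R p n (fun k => if k == i then h else fun=> 1) (fun k => if k == i then s else 1))//.
- by rewrite (bigD1 i)//= eqxx big1 ?mulr1// => k /negbTE ->.
- by move=> k y; case: ifP.
- by move=> k; case: ifP => _ //; rewrite esum_one.
Qed.

Lemma Ex_pair (R : realType) (p : nat -> R) n (i j : 'I_n) (y : nat) :
  (forall y, 0 <= p y) ->
  \esum_(y in [set: nat]) (p y)%:E = 1%E ->
  Ex p (fun w => (tnth w i == y)%:R * (tnth w j == y)%:R) =
    (if i == j then p y else p y ^+ 2)%:E.
Proof.
move=> p0 p1; have [<-|nij] := eqVneq i j.
  apply: (@Ex_single R p n i (fun x => (x == y)%:R * (x == y)%:R) (p y)) => //.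
  rewrite -(esum_point y p0); apply: eq_esum => x _; by case: eqP; rewrite ?mul1r ?mul0r.
set h := fun k => if (k == i) || (k == j) then (fun x : nat => (x == y)%:R) else (fun=> 1 : R).
have -> : (fun w : n.-tuple nat => (tnth w i == y)%:R * (tnth w j == y)%:R) =
  (fun w => \prod_(k < n) h k (tnth w k)).
  apply/funext => w; rewrite (bigD1 i)//= (bigD1 j) /=; last by rewrite eq_sym nij.
  rewrite /h !eqxx !orbT /= mulrA.
  rewrite big1 ?mulr1// => k /andP[/negbTE -> /negbTE ->]//.
rewrite (@Ex_prod R p n h (fun k => if (k == i) || (k == j) then p y else 1))//.
- rewrite (bigD1 i)//= (bigD1 j) /=; last by rewrite eq_sym nij.
  rewrite !eqxx !orbT /= mulrA expr2.
  by rewrite big1 ?mulr1// => k /andP[/negbTE -> /negbTE ->].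
- by move=> k x; rewrite /h; case: ifP.
- by move=> k; rewrite /h; case: ifP => _; rewrite ?esum_one ?esum_point.
Qed.


Lemma ExD (R : realType) (p : nat -> R) n (F G : n.-tuple nat -> R) :
  (forall y, 0 <= p y) -> (forall w, 0 <= F w) -> (forall w, 0 <= G w) ->
  Ex p (fun w => F w + G w) = (Ex p F + Ex p G)%E.
Proof.
move=> p0 F0 G0; rewrite /Ex -esumD; last 2 first.
- by move=> w _; rewrite lee_fin mulr_ge0 ?Wt_ge0.
- by move=> w _; rewrite lee_fin mulr_ge0 ?Wt_ge0.
by apply: eq_esum => w _; rewrite mulrDl EFinD.
Qed.

Lemma ExZ (R : realType) (p : nat -> R) n (c : R) (F : n.-tuple nat -> R) :
  (forall y, 0 <= p y) -> 0 <= c -> (forall w, 0 <= F w) ->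
  Ex p (fun w => c * F w) = (c%:E * Ex p F)%E.
Proof.
move=> p0 c0 F0; rewrite /Ex -esumZr//; last first.
  by move=> w; rewrite lee_fin mulr_ge0 ?Wt_ge0.
by apply: eq_esum => w _; rewrite -mulrA EFinM.
Qed.

Lemma Exsum (R : realType) (p : nat -> R) n (I : choiceType) (r : seq I) (F : I -> n.-tuple nat -> R) :
  (forall y, 0 <= p y) -> (forall j w, 0 <= F j w) ->
  Ex p (fun w => \sum_(j <- r) F j w) = (\sum_(j <- r) Ex p (F j))%E.
Proof.
move=> p0 F0; rewrite /Ex -esum_sum; last first.
  by move=> w j _ _; rewrite lee_fin mulr_ge0 ?Wt_ge0.
apply: eq_esum => w _; rewrite mulr_suml.
by rewrite sumEFin.
Qed.

Lemma Ex_le (R : realType) (p : nat -> R) n (F G : n.-tuple nat -> R) :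
  (forall y, 0 <= p y) -> (forall w, F w <= G w) ->
  (Ex p F <= Ex p G)%E.
Proof.
move=> p0 FG; apply: le_esum => w _; rewrite lee_fin ler_wpM2r ?Wt_ge0//.
Qed.

Lemma cntE n (w : n.-tuple nat) (y : nat) (R : realType) :
  ((cnt w y)%:R : R) = \sum_(i < n) ((tnth w i == y)%:R : R).
Proof.
rewrite /cnt -sum1_count big_tuple natr_sum big_mkcond /=.
by apply: eq_bigr => i _; rewrite eq_sym; case: eqP.
Qed.

Lemma Ex_1 (R : realType) (p : nat -> R) n :
  (forall y, 0 <= p y) -> \esum_(y in [set: nat]) (p y)%:E = 1%E ->
  Ex p (fun _ : n.-tuple nat => 1) = 1%E.
Proof.
move=> p0 p1; have -> : (fun _ : n.-tuple nat => 1 : R) =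
   (fun w => \prod_(i < n) (fun=> 1 : R) (tnth w i)).
  by apply/funext => w; rewrite big1.
rewrite (@Ex_prod R p n (fun _ _ => 1) (fun=> 1))// ?big1//.
by move=> i; rewrite esum_one.
Qed.

Lemma Ex_cnt (R : realType) (p : nat -> R) n (y : nat) :
  (forall y, 0 <= p y) -> \esum_(y in [set: nat]) (p y)%:E = 1%E ->
  Ex p (fun w : n.-tuple nat => (cnt w y)%:R) = (n%:R * p y)%:E.
Proof.
move=> p0 p1.
have -> : (fun w : n.-tuple nat => ((cnt w y)%:R : R)) =
   (fun w => \sum_(i <- index_enum 'I_n) (tnth w i == y)%:R * (tnth w i == y)%:R).
  by apply/funext => w; rewrite cntE; apply: eq_bigr => i _; case: eqP; rewrite ?mulr1 ?mulr0.
rewrite Exsum//.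
under eq_bigr do rewrite Ex_pair// eqxx.
by rewrite sumEFin sumr_const card_ord mulr_natl.
Qed.

Lemma Ex_cnt2 (R : realType) (p : nat -> R) n (y : nat) :
  (forall y, 0 <= p y) -> \esum_(y in [set: nat]) (p y)%:E = 1%E ->
  Ex p (fun w : n.-tuple nat => (cnt w y)%:R ^+ 2) =
    (n%:R * p y + n%:R * (n%:R - 1) * p y ^+ 2)%:E.
Proof.
move=> p0 p1.
have -> : (fun w : n.-tuple nat => ((cnt w y)%:R ^+ 2 : R)) =
   (fun w => \sum_(i <- index_enum 'I_n) \sum_(j <- index_enum 'I_n)
        (tnth w i == y)%:R * (tnth w j == y)%:R).
  apply/funext => w; rewrite cntE expr2 big_distrl /=; apply: eq_bigr => i _.
  by rewrite big_distrr.
rewrite Exsum//; last by move=> *; apply: sumr_ge0 => *; rewrite mulr_ge0.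
under eq_bigr => i _ do rewrite Exsum//.
under eq_bigr => i _ do under eq_bigr => j _ do rewrite Ex_pair//.
under eq_bigr => i _ do rewrite sumEFin.
rewrite sumEFin; congr (_%:E).
have inner (i : 'I_n) : \sum_(j <- index_enum 'I_n) (if i == j then p y else p y ^+ 2) =
   p y + (n%:R - 1) * p y ^+ 2.
  rewrite (bigD1 i)//= eqxx; congr (_ + _).
  rewrite (eq_bigr (fun=> p y ^+ 2)); last by move=> j /negbTE; rewrite eq_sym => ->.
  rewrite sumr_const cardC1 card_ord; case: n i => [[]//|m _] /=.
  by rewrite -mulr_natl -natr1; ring.
under eq_bigr => i _ do rewrite inner.
rewrite sumr_const card_ord -mulr_natl; ring.
Qed.

Lemma Ex_var (R : realType) (p : nat -> R) n (y : nat) :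
  (forall y, 0 <= p y) -> \esum_(y in [set: nat]) (p y)%:E = 1%E ->
  Ex p (fun w : n.-tuple nat => ((cnt w y)%:R - n%:R * p y) ^+ 2) =
    (n%:R * p y * (1 - p y))%:E.
Proof.
move=> p0 p1.
set V := Ex p _.
have a0 : 0 <= 2 * n%:R * p y by rewrite !mulr_ge0.
have H : (V + ((2 * n%:R * p y) * (n%:R * p y))%:E =
  (n%:R * p y + n%:R * (n%:R - 1) * p y ^+ 2 + (n%:R * p y) ^+ 2)%:E)%E.
  rewrite EFinM -Ex_cnt// -ExZ//.
  rewrite /V -ExD//; try by move=> w; rewrite ?sqr_ge0 ?mulr_ge0.
  rewrite EFinD -Ex_cnt2// -[X in (_ + X)%E]mule1 -(Ex_1 n p0 p1).
  rewrite -ExZ ?sqr_ge0// -ExD//; last by move=> *; rewrite mulr1 sqr_ge0.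
  rewrite /Ex; apply: eq_esum => w _; congr (_%:E); congr (_ * _); ring.
have V0 : (0 <= V)%E by apply: esum_ge0 => w _; rewrite lee_fin mulr_ge0 ?sqr_ge0 ?Wt_ge0.
move: H V0; case: V => [r| |] //= H _.
  move: H => /eqP; rewrite -EFinD eqe => /eqP H; congr (_%:E).
  have -> : r = r + 2 * n%:R * p y * (n%:R * p y) - 2 * n%:R * p y * (n%:R * p y) by ring.
  rewrite H; ring.
Qed.


Lemma ln_le_sub1 (R : realType) (x : R) : 0 < x -> ln x <= x - 1.
Proof.
move=> x0; have := @le_ln1Dx R (x - 1).
rewrite (_ : 1 + (x - 1) = x); last by ring.
by apply; lra.
Qed.

Lemma ln_ge_1subinv (R : realType) (x : R) : 0 < x -> 1 - x^-1 <= ln x.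
Proof.
move=> x0; have := @ln_le_sub1 R x^-1; rewrite invr_gt0 lnV ?posrE// => /(_ x0).
by rewrite lerNl opprB.
Qed.

Lemma sum_undup_sS (R : realType) (w : seq nat) (sS : seq nat) (F : nat -> R) :
  uniq sS -> (forall y, y \in w -> y \in sS) -> (forall y, y \notin w -> F y = 0) ->
  \sum_(y <- undup w) F y = \sum_(y <- sS) F y.
Proof.
move=> uS wS F0.
have -> : \sum_(y <- sS) F y = \sum_(y <- sS | y \in w) F y.
  by rewrite [RHS]big_mkcond; apply: eq_bigr => y _; case: ifP => // /negbT /F0.
rewrite -[RHS]big_filter; apply: perm_big; apply: uniq_perm.
- exact: undup_uniq.
- exact: filter_uniq.
- by move=> y; rewrite mem_undup mem_filter; case: (boolP (y \in w)) => // /wS ->.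
Qed.

Lemma sum_eq_count (R : realType) (x : nat) (s : seq nat) :
  \sum_(y <- s) ((x == y)%:R : R) = (count_mem x s)%:R.
Proof.
elim: s => [|a s IH]; first by rewrite big_nil.
by rewrite big_cons IH /= natrD eq_sym.
Qed.

Lemma sum_cnt_sS (R : realType) n (w : n.-tuple nat) (sS : seq nat) :
  uniq sS -> (forall y, y \in w -> y \in sS) ->
  \sum_(y <- sS) ((cnt w y)%:R : R) = n%:R.
Proof.
move=> uS wS.
rewrite (eq_bigr (fun y => \sum_(i < n) ((tnth w i == y)%:R : R))); last by move=> y _; rewrite cntE.
rewrite exchange_big /=.
rewrite (eq_bigr (fun=> 1)); first by rewrite sumr_const card_ord.
by move=> i _; rewrite sum_eq_count count_uniq_mem // wS // mem_tnth.
Qed.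

Definition Zs (R : realType) (p : nat -> R) n (sS : seq nat) (w : n.-tuple nat) : R :=
  \sum_(y <- sS) ((cnt w y)%:R - n%:R * p y) ^+ 2 / (n%:R * p y).

Lemma LR_bound (R : realType) (p : nat -> R) n (w : n.-tuple nat) (sS : seq nat) :
  (0 < n)%N -> uniq sS -> (forall y, 0 <= p y) -> (forall y, y \in sS -> 0 < p y) ->
  (forall y, y \in w -> y \in sS) -> \sum_(y <- sS) p y <= 1 ->
  0 <= loglik_ratio p w /\
  loglik_ratio p w <= Zs p sS w + n%:R * (1 - \sum_(y <- sS) p y).
Proof.
move=> n0 uS p0 pS wS P1.
have n0R : (0 : R) < n%:R by rewrite ltr0n.
have cpos y : y \in undup w -> (0 : R) < (cnt w y)%:R.
  by rewrite mem_undup ltr0n /cnt -has_pred1 has_count.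
have pw y : y \in undup w -> 0 < p y by rewrite mem_undup => /wS /pS.
split.
- apply: (@le_trans _ _ (\sum_(y <- undup w) ((cnt w y)%:R - n%:R * p y))).
    rewrite big_split /= sumrN -mulr_sumr.
    rewrite (@sum_undup_sS R w sS (fun y => (cnt w y)%:R)) //; last first.
      by move=> y yw; rewrite /cnt (count_memPn yw).
    rewrite sum_cnt_sS // subr_ge0 -{2}(mulr1 n%:R) ler_wpM2l ?ler0n//.
    apply: le_trans P1.
    rewrite (eq_big_seq (fun y => (y \in w)%:R * p y)); last first.
      by move=> y; rewrite mem_undup => ->; rewrite mul1r.
    rewrite (@sum_undup_sS R w sS (fun y => (y \in w)%:R * p y)) //; last first.
      by move=> y /negbTE ->; rewrite mul0r.
    by apply: ler_sum => y _; case: (y \in w); rewrite ?mul1r ?mul0r.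
  rewrite /loglik_ratio big_seq [X in _ <= X]big_seq; apply: ler_sum => y yw.
  have c0 := cpos y yw; have p0' := pw y yw.
  have x0 : 0 < (cnt w y)%:R / n%:R / p y by rewrite !divr_gt0.
  apply: le_trans (ler_wpM2l (ltW c0) (ln_ge_1subinv x0)).
  rewrite mulrBr mulr1 lerD2l lerN2 invfM invrK.
  set c := (cnt w y)%:R in c0 *.
  have cn0 : c != 0 by rewrite gt_eqF.
  have nn0 : (n%:R : R) != 0 by rewrite gt_eqF.
  rewrite le_eqVlt; apply/orP; left; apply/eqP; field.
  by rewrite cn0 nn0.
- have nn0 : (n%:R : R) != 0 by rewrite gt_eqF.
  have eZ : Zs p sS w = \sum_(y <- sS) (((cnt w y)%:R) ^+ 2 / (n%:R * p y) - (cnt w y)%:R)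
     - \sum_(y <- sS) ((cnt w y)%:R : R) + n%:R * \sum_(y <- sS) p y.
    rewrite /Zs -sumrB mulr_sumr -big_split /=; apply: eq_big_seq => y yS.
    have py0 : p y != 0 by rewrite gt_eqF ?pS.
    by field; rewrite nn0 py0.
  rewrite eZ sum_cnt_sS // (_ : forall a b c : R, a - b + b * c + b * (1 - c) = a); last first.
    by move=> a b c; ring.
  rewrite /loglik_ratio -(@sum_undup_sS R w sS (fun y => ((cnt w y)%:R) ^+ 2 / (n%:R * p y) - (cnt w y)%:R)) //; last first.
    by move=> y yw; rewrite /cnt (count_memPn yw) expr0n /= mul0r subr0.
  rewrite big_seq [X in _ <= X]big_seq; apply: ler_sum => y yw.
  have c0 := cpos y yw; have p0' := pw y yw.
  have x0 : 0 < (cnt w y)%:R / n%:R / p y by rewrite !divr_gt0.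
  apply: le_trans (ler_wpM2l (ltW c0) (ln_le_sub1 x0)) _.
  set c := (cnt w y)%:R in c0 *.
  have cn0 : c != 0 by rewrite gt_eqF.
  have py0 : p y != 0 by rewrite gt_eqF.
  rewrite le_eqVlt; apply/orP; left; apply/eqP; field.
  by rewrite nn0 py0.
Qed.


Lemma p_facts (R : realType) (G : probability R R) (f : R -> nat -> R) (p : nat -> R) :
  (forall th y, 0 <= f th y) ->
  (forall th, (\sum_(y <oo) (f th y)%:E)%E = 1%E) ->
  (forall y, measurable_fun setT (fun th => f th y)) ->
  (forall y, (p y)%:E = (\int[G]_th (f th y)%:E)%E) ->
  (forall y, 0 <= p y) /\ \esum_(y in [set: nat]) (p y)%:E = 1%E.
Proof.
move=> f0 f1 fm pE.
have p0 y : 0 <= p y by rewrite -lee_fin pE integral_ge0// => th _; rewrite lee_fin.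
split => //.
rewrite -nneseries_esumT; last by move=> y; rewrite lee_fin.
under eq_eseriesr do rewrite pE.
rewrite -integral_nneseries //; last first.
- by move=> y th _; rewrite lee_fin.
- by move=> y; apply/measurable_EFinP; exact: fm.
under eq_integral do rewrite f1.
by rewrite integral_cst // mul1e; exact: probability_setT.
Qed.

Lemma finite_enum (R : realType) (P : nat -> Prop) (b : R) :
  (forall s, uniq s -> (forall y, y \in s -> P y) -> (size s)%:R <= b) ->
  exists s, uniq s /\ (forall y, y \in s <-> P y).
Proof.
move=> Hb; apply: contrapT => Hn.
have step : forall s, uniq s -> (forall y, y \in s -> P y) ->
    exists y, P y /\ y \notin s.
  move=> s us sP; apply: contrapT => Hy; apply: Hn; exists s; split => // y.
  split; first exact: sP.
  move=> Py; apply: contrapT => ys; apply: Hy; exists y; split => //.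
  by apply/negP.
have build : forall k, exists s, [/\ uniq s, (forall y, y \in s -> P y) & size s = k].
  elim=> [|k [s [us sP sk]]]; first by exists [::].
  have [y [Py ys]] := step s us sP.
  exists (y :: s); split => //=; first by rewrite ys.
  - by move=> z; rewrite inE => /orP[/eqP ->|/sP].
  - by rewrite sk.
have [s [us sP sk]] := build (Num.truncn b).+1.
have := Hb s us sP; rewrite sk => H.
by have := truncnS_gt b; rewrite ltNge H.
Qed.

Lemma notS_facts (R : realType) (p : nat -> R) (eps : nat -> R) n (sS : seq nat) :
  (forall y, 0 <= p y) -> \esum_(y in [set: nat]) (p y)%:E = 1%E ->
  uniq sS -> (forall y, y \in sS <-> Sn p eps n y) ->
  prob_notS p eps n = \esum_(y in [set: nat]) ((y \notin sS)%:R * p y)%:E /\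
  prob_notS p eps n = (1 - \sum_(y <- sS) p y)%:E.
Proof.
move=> p0 p1 uS hS.
have eS : Sn p eps n = [set` sS].
  by apply/seteqP; split => y /=; rewrite hS.
have e1 : prob_notS p eps n = \esum_(y in [set: nat]) ((y \notin sS)%:R * p y)%:E.
  rewrite /prob_notS esum_mkcond; apply: eq_esum => y _.
  rewrite eS in_setC; case: (boolP (y \in sS)) => ys.
    by rewrite (@mem_set _ [set` sS] y ys) /= mul0r.
  by rewrite (@memNset _ [set` sS] y) /= ?mul1r //; apply/negP.
split => //.
rewrite /prob_notS eS.
have := esumID [set` sS] [set: nat] (fun y => (p y)%:E) (fun y _ => p0 y).
rewrite p1 !setTI esum_fset; last 2 first.
- exact: finite_seq.
- by move=> y _; rewrite lee_fin.
rewrite -fsbig_seq // sumEFin.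
have X0 : (0 <= \esum_(y in ~` [set` sS]) (p y)%:E)%E by apply: esum_ge0 => y _; rewrite lee_fin.
move: X0; case: (\esum_(y in ~` [set` sS]) (p y)%:E) => [r| |] //= _.
move=> /eqP; rewrite -EFinD eqe => /eqP H; congr (_%:E); rewrite H; ring.
Qed.


Lemma Ex_Zs (R : realType) (p : nat -> R) n (sS : seq nat) :
  (0 < n)%N -> (forall y, 0 <= p y) -> \esum_(y in [set: nat]) (p y)%:E = 1%E ->
  (forall y, y \in sS -> 0 < p y) ->
  Ex p (@Zs R p n sS) = (\sum_(y <- sS) (1 - p y))%:E.
Proof.
move=> n0 p0 p1 pS.
have -> : Zs p sS = (fun w : n.-tuple nat => \sum_(y <- sS)
    (n%:R * p y)^-1 * ((cnt w y)%:R - n%:R * p y) ^+ 2).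
  by apply/funext => w; rewrite /Zs; apply: eq_bigr => y _; rewrite mulrC.
rewrite Exsum//; last by move=> y w; rewrite mulr_ge0 ?sqr_ge0 ?invr_ge0 ?mulr_ge0.
rewrite -sumEFin big_seq [RHS]big_seq; apply: eq_bigr => y yS.
rewrite ExZ ?invr_ge0 ?mulr_ge0 //; last by move=> w; rewrite sqr_ge0.
rewrite Ex_var// -EFinM; congr (_%:E).
have py : p y != 0 by rewrite gt_eqF ?pS.
have nn : (n%:R : R) != 0 by rewrite pnatr_eq0 -lt0n.
by field; rewrite nn py.
Qed.

Lemma Ex_B1 (R : realType) (p : nat -> R) n (sS : seq nat) (q : R) :
  (forall y, 0 <= p y) -> \esum_(y in [set: nat]) (p y)%:E = 1%E ->
  \esum_(y in [set: nat]) ((y \notin sS)%:R * p y)%:E = q%:E ->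
  Ex p (fun w : n.-tuple nat => \sum_(i < n) ((tnth w i \notin sS)%:R : R)) = (n%:R * q)%:E.
Proof.
move=> p0 p1 hq.
rewrite (@Exsum R p n _ (index_enum 'I_n) (fun i w => (tnth w i \notin sS)%:R)) //.
rewrite (eq_bigr (fun=> q%:E)); last first.
  by move=> i _; rewrite (@Ex_single R p n i (fun y => (y \notin sS)%:R) q).
by rewrite sumEFin sumr_const card_ord mulr_natl.
Qed.

Lemma main_bound (R : realType) (p : nat -> R) n (sS : seq nat) (t q : R) :
  (0 < n)%N -> (forall y, 0 <= p y) -> \esum_(y in [set: nat]) (p y)%:E = 1%E ->
  uniq sS -> (forall y, y \in sS -> 0 < p y) ->
  \esum_(y in [set: nat]) ((y \notin sS)%:R * p y)%:E = q%:E ->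
  q = 1 - \sum_(y <- sS) p y -> n%:R * q <= 1 -> 1 < t ->
  (iid_prob p [set w : n.-tuple nat | (t < `|loglik_ratio p w|)%R]
    <= (n%:R * q + (size sS)%:R / (t - 1))%:E)%E.
Proof.
move=> n0 p0 p1 uS pS hq qE nq t1.
have q0 : 0 <= q by rewrite -lee_fin -hq esum_ge0 // => y _; rewrite lee_fin mulr_ge0.
have t0 : 0 < t - 1 by rewrite subr_gt0.
have Zs0 (w : n.-tuple nat) : 0 <= Zs p sS w.
  by apply: sumr_ge0 => y _; rewrite divr_ge0 ?sqr_ge0 ?mulr_ge0.
set B := fun w : n.-tuple nat => \sum_(i < n) ((tnth w i \notin sS)%:R : R).
have B0 w : 0 <= B w by apply: sumr_ge0 => i _.
apply: (@le_trans _ _ (Ex p (fun w => B w + (t - 1)^-1 * Zs p sS w))).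
  rewrite /iid_prob /Ex esum_mkcond; apply: le_esum => w _.
  case: ifP => wA; last first.
    by rewrite lee_fin mulr_ge0 ?Wt_ge0 // addr_ge0 // mulr_ge0 // invr_ge0 ltW.
  rewrite lee_fin -{1}(mul1r (\prod_(i < n) p (tnth w i))) ler_wpM2r ?Wt_ge0 //.
  move: wA; rewrite inE /= => wA.
  have Zt : 0 <= (t - 1)^-1 * Zs p sS w by rewrite mulr_ge0 ?invr_ge0 ?(ltW t0) ?Zs0.
  case: (boolP [exists i, tnth w i \notin sS]).
    move=> /existsP [i hi]; rewrite -[X in X <= _]addr0; apply: lerD => //.
    rewrite /B (bigD1 i) //= hi lerDl; exact: sumr_ge0.
  rewrite negb_exists => /forallP hall.
  have wS : forall y, y \in w -> y \in sS.
    by move=> y /tnthP [i ->]; move: (hall i); rewrite negbK.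
  have P1 : \sum_(y <- sS) p y <= 1 by rewrite -subr_ge0 -qE.
  have [LR0 LRle] := LR_bound n0 uS p0 pS wS P1.
  rewrite -qE in LRle.
  have tZ : t - 1 <= Zs p sS w.
    move: wA; rewrite ger0_norm // => wA; lra.
  rewrite -[X in X <= _]add0r; apply: lerD => //.
  by rewrite -[X in X <= _](mulVf (lt0r_neq0 t0)); apply: ler_wpM2l => //; rewrite invr_ge0 ltW.
rewrite ExD //; last by move=> w; rewrite mulr_ge0 ?invr_ge0 ?(ltW t0) ?Zs0.
rewrite ExZ ?invr_ge0 ?(ltW t0) // Ex_Zs // (Ex_B1 n p0 p1 hq) -EFinM -EFinD lee_fin.
rewrite lerD2l mulrC ler_wpM2r ?invr_ge0 ?(ltW t0) //.
rewrite -sum1_size natr_sum; apply: ler_sum => y _.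
by rewrite lerBlDr lerDl p0.
Qed.


Lemma final_arith (R : realType) (C eta delta alpha L s nq : R) :
  0 < eta -> 0 < delta -> 0 < alpha -> 1 <= L ->
  ((2 * `|C| + 2 * eta) / (eta * delta)) `^ alpha^-1 <= L ->
  s <= C * L -> nq <= eta / 2 ->
  1 < delta * L `^ (1 + alpha) /\ nq + s / (delta * L `^ (1 + alpha) - 1) <= eta.
Proof.
move=> e0 d0 a0 L1 LK sC nqe.
set K := (2 * `|C| + 2 * eta) / (eta * delta).
have C0 : 0 <= `|C| := normr_ge0 C.
have K0 : 0 <= K by apply: divr_ge0; [lra|apply: mulr_ge0; lra].
have L0 : 0 < L by lra.
have LaK : K <= L `^ alpha.
  have := @ge0_ler_powR R alpha (ltW a0) (K `^ alpha^-1) L.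
  rewrite !nnegrE powR_ge0 (ltW L0) -powRrM mulVf ?gt_eqF // powRr1 //.
  by move=> /(_ isT isT LK).
have eL : L `^ (1 + alpha) = L * L `^ alpha.
  by rewrite powRD ?powRr1 ?(ltW L0) //; apply/implyP => _; rewrite gt_eqF.
rewrite eL.
have tK : delta * K * L <= delta * (L * L `^ alpha).
  rewrite -mulrA; apply: ler_wpM2l; first lra.
  rewrite [K * L]mulrC; apply: ler_wpM2l => //; lra.
have dK : delta * K = (2 * `|C| + 2 * eta) / eta.
  by rewrite /K; field; rewrite !gt_eqF.
rewrite dK in tK.
have tL : (2 * `|C| + 2 * eta) / eta * L = 2 * `|C| / eta * L + 2 * L.
  by field; rewrite gt_eqF.
rewrite tL in tK.
have Ce : 0 <= 2 * `|C| / eta * L.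
  apply: mulr_ge0; last lra; apply: divr_ge0; lra.
set t := delta * (L * L `^ alpha) in tK *.
split; first lra.
have t1 : 0 < t - 1 by lra.
have sCL : s <= `|C| * L.
  apply: (le_trans sC); rewrite ler_wpM2r ?(ltW L0) // ler_norm //.
have : s / (t - 1) <= eta / 2.
  rewrite ler_pdivrMr // (le_trans sCL) //.
  have : `|C| * L = eta / 2 * (2 * `|C| / eta * L) by field; rewrite gt_eqF.
  move=> ->; rewrite ler_wpM2l ?divr_ge0 ?ltW //; lra.
lra.
Qed.

Unset Implicit Arguments. Set Strict Implicit.


Theorem proposition1 (R : realType)
  (G : probability R R)                    (* law of theta *)
  (f : R -> nat -> R)                      (* f theta y = P(Y = y | theta) *)
  (p : nat -> R)                           (* p_y = P_G(Y = y) *)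
  (eps : nat -> R) :
  (* G has bounded support *)
  (exists M : R, G [set x | M < `|x|] = 0%E) ->
  (* each f theta is a probability mass function on the countable set nat *)
  (forall th y, 0 <= f th y) ->
  (forall th, (\sum_(y <oo) (f th y)%:E)%E = 1%E) ->
  (forall y, measurable_fun setT (fun th => f th y)) ->
  (* p_y = int f_theta(y) dG(theta) *)
  (forall y, (p y)%:E = (\int[G]_th (f th y)%:E)%E) ->
  (* eps_n -> 0 *)
  eps @ \oo --> 0 ->
  (forall n, 0 < eps n) ->
  (* (i) P_G(Y in S_n) = 1 - o(1/n) *)
  (forall d : R, 0 < d ->
     \forall n \near \oo, (n%:R%:E * prob_notS p eps n <= d%:E)%E) ->
  (* (ii) |S_n| = O(log n) *)
  (exists C : R, \forall n \near \oo, forall s : seq nat,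
     uniq s -> (forall y, y \in s -> Sn p eps n y) ->
     (size s)%:R <= C * ln (n%:R : R)) ->
  (* conclusion: sum_y n_y log(phat_y/p_y) = o_p((log n)^(1+alpha)) *)
  forall alpha : R, 0 < alpha ->
  forall delta eta : R, 0 < delta -> 0 < eta ->
  \forall n \near \oo,
    (iid_prob p [set w : n.-tuple nat |
        (delta * (ln (n%:R : R)) `^ (1 + alpha) < `|loglik_ratio p w|)%R ]
     <= eta%:E)%E.
Proof.
move=> _ f0 f1 fm pE _ epspos hi [C hC] alpha a0 delta eta d0 e0.
have [p0 p1] := p_facts f0 f1 fm pE.
set K := (2 * `|C| + 2 * eta) / (eta * delta).
set M := Num.max 1 (K `^ alpha^-1).
set d := Num.min (eta / 2) 1.
have dpos : 0 < d by rewrite lt_min ltr01 andbT divr_gt0.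
have hM : \forall n \near \oo, expR M < (n%:R : R).
  apply: filterS (nbhs_infty_ge (Num.truncn (expR M)).+1) => n hn.
  by apply: (lt_le_trans (truncnS_gt _)); rewrite ler_nat.
have HA : \forall n \near \oo, [/\ (0 < n)%N,
    (n%:R%:E * prob_notS p eps n <= d%:E)%E,
    (forall s : seq nat, uniq s -> (forall y, y \in s -> Sn p eps n y) ->
       (size s)%:R <= C * ln (n%:R : R)) &
    expR M < (n%:R : R)].
  near=> n; split.
  - by near: n; exact: nbhs_infty_gt.
  - by near: n; exact: hi.
  - by near: n; exact: hC.
  - by near: n; exact: hM.
apply: filterS HA => n [n0 hq hS hMn].
have [sS [uS hsS]] := finite_enum hS.
have [e1 e2] := notS_facts p0 p1 uS hsS.
set q := 1 - \sum_(y <- sS) p y in e2.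
have n0R : (0 : R) < n%:R by rewrite ltr0n.
have pS : forall y, y \in sS -> 0 < p y.
  move=> y /hsS; rewrite /Sn /= => hy; apply: lt_le_trans hy.
  by rewrite divr_gt0.
have nq : n%:R * q <= d by move: hq; rewrite e2 -EFinM lee_fin.
have nq1 : n%:R * q <= 1 by apply: (le_trans nq); rewrite ge_min lexx orbT.
have nq2 : n%:R * q <= eta / 2 by apply: (le_trans nq); rewrite ge_min lexx.
set L := ln (n%:R : R).
have LM : M <= L.
  rewrite /L -(expRK M) ler_ln ?posrE ?expR_gt0 //; exact: ltW.
have L1 : 1 <= L by apply: le_trans LM; rewrite le_max lexx.
have LK : K `^ alpha^-1 <= L by apply: le_trans LM; rewrite le_max lexx orbT.
have sC : (size sS)%:R <= C * L by apply: hS => // y /hsS.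
have [t1 fin] := final_arith e0 d0 a0 L1 LK sC nq2.
apply: le_trans (main_bound n0 p0 p1 uS pS (etrans (esym e1) e2) erefl nq1 t1) _.
by rewrite lee_fin.
Unshelve. all: by end_near.
Qed.
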